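(* Let $a_1>a_2\ge a_3\ge\cdots\ge a_n$ be real numbers in $[a,b]$, $w_1,\dots,w_n$ real weights with $w_1>0$, and $k$ a positive integer such that $\sum_{i=1}^n w_ia_i^j=0$ for all integers $0\le j<k$. Suppose at least one of the following holds: (1) the sequence $w_1,w_2,\dots,w_n$ has at most $k$ sign changes; (2) the sequence of partial sums $w_1,\ w_1+w_2,\ \dots,\ w_1+\cdots+w_n$ has at most $k-1$ sign changes; (3) the sequence whose $m$-th term ($1\le m\le n$) is $\left(\sum_{i=1}^m w_ia_i\right)-\left(\sum_{i=1}^m w_i\right)a_m$ has at most $k-2$ sign changes. Then $\sum_{i=1}^n w_if(a_i)\ge 0$ for every $k$ times differentiable $f:[a,b]\to\mathbb{R}$ with $f^{(k)}\ge 0$.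
   Context: The number of sign changes of a finite real sequence $c_1,\dots,c_N$ is the maximum integer $m$ such that there exist indices $i_1<i_2<\cdots<i_{m+1}$ with $c_{i_l}c_{i_{l+1}}<0$ for $1\le l\le m$ (zero terms are ignored). *)

(* Defs.v *)
From Stdlib Require Import Reals Lra Lia ZArith.
Open Scope R_scope.

Fixpoint sum1n (f : nat -> R) (n : nat) : R :=
  match n with
  | O => 0
  | S m => sum1n f m + f (S m)
  end.

Definition has_sign_changes (c : nat -> R) (N m : nat) : Prop :=
  exists idx : nat -> nat,
    (forall l, (1 <= l <= m + 1)%nat -> (1 <= idx l <= N)%nat) /\
    (forall l, (1 <= l <= m)%nat -> (idx l < idx (l + 1)%nat)%nat) /\
    (forall l, (1 <= l <= m)%nat -> c (idx l) * c (idx (l + 1)%nat) < 0).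

(* The number of sign changes (the maximum such m) is at most K (K integer,
   possibly negative, in which case the condition is unsatisfiable). *)
Definition at_most_sign_changes (c : nat -> R) (N : nat) (K : Z) : Prop :=
  forall m : nat, has_sign_changes c N m -> (Z.of_nat m <= K)%Z.

Definition Icc (a b : R) : R -> Prop := fun x => a <= x <= b.

(* f is k times differentiable on [a,b] with successive derivatives
   F 0 = f, F 1, ..., F k (derivatives taken within [a,b], i.e. one-sided
   at the endpoints). *)
Definition derivs_on (a b : R) (k : nat) (f : R -> R) (F : nat -> R -> R) : Prop :=
  (forall x, Icc a b x -> F O x = f x) /\
  (forall j x, (j < k)%nat -> Icc a b x -> D_in (F j) (F (S j)) (Icc a b) x).

(* Main.v *)
Require Import Defs.
From Stdlib Require Import Reals Lra Lia ZArith List.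
Import ListNotations.
Open Scope R_scope.

Definition clamp (a b t : R) := Rmax a (Rmin b t).

Lemma clamp_in a b t : a <= b -> Icc a b (clamp a b t).
Proof. intro. unfold clamp, Icc, Rmax, Rmin. repeat destruct Rle_dec; lra. Qed.

Lemma clamp_id a b t : Icc a b t -> clamp a b t = t.
Proof. unfold clamp, Icc, Rmax, Rmin. intros. repeat destruct Rle_dec; lra. Qed.

Lemma clamp_lip a b t y : a <= b -> Rabs (clamp a b t - clamp a b y) <= Rabs (t - y).
Proof.
  intro. unfold clamp, Rmax, Rmin. unfold Rabs.
  repeat destruct Rle_dec; repeat destruct Rcase_abs; lra.
Qed.

Lemma cont_clamp a b h : a <= b ->
  (forall x, Icc a b x -> continue_in h (Icc a b) x) ->
  forall y, continuity_pt (fun t => h (clamp a b t)) y.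
Proof.
  intros Hab Hc y eps Heps.
  destruct (Hc (clamp a b y) (clamp_in a b y Hab) eps Heps) as [alp [Halp H]].
  exists alp. split; auto. intros t [_ Ht]. simpl in *. unfold R_dist in *.
  destruct (Req_dec (clamp a b t) (clamp a b y)) as [E|E].
  - rewrite E. unfold Rminus. rewrite Rplus_opp_r, Rabs_R0. lra.
  - apply H. split. split. apply clamp_in; auto. auto.
    simpl. unfold R_dist. pose proof (clamp_lip a b t y Hab). lra.
Qed.

Lemma deriv_clamp a b h h' x : a < x < b -> D_in h h' (Icc a b) x ->
  derivable_pt_lim (fun t => h (clamp a b t)) x (h' x).
Proof.
  intros Hx HD eps Heps.
  destruct (HD eps Heps) as [alp [Halp H]].
  assert (Hd : 0 < Rmin alp (Rmin (x - a) (b - x))).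
  { repeat apply Rmin_pos; lra. }
  exists (mkposreal _ Hd). intros hh Hh0 Hhh. simpl in Hhh.
  pose proof (Rmin_l alp (Rmin (x - a) (b - x))).
  pose proof (Rmin_r alp (Rmin (x - a) (b - x))).
  pose proof (Rmin_l (x - a) (b - x)). pose proof (Rmin_r (x - a) (b - x)).
  assert (Hin : Icc a b (x + hh)).
  { unfold Icc. apply Rabs_def2 in Hhh. lra. }
  rewrite (clamp_id a b (x+hh) Hin), (clamp_id a b x) by (unfold Icc; lra).
  specialize (H (x + hh)). simpl in H. unfold R_dist in H.
  replace (x + hh - x) with hh in H by ring.
  apply H. split. split; auto. intro E. apply Hh0. lra. lra.
Qed.

Definition Chain (a b : R) (k : nat) (F : nat -> R -> R) : Prop :=
  forall j x, (j < k)%nat -> Icc a b x -> D_in (F j) (F (S j)) (Icc a b) x.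

Lemma MVT_Icc a b h h' p q : a <= p -> p < q -> q <= b ->
  (forall x, Icc a b x -> D_in h h' (Icc a b) x) ->
  exists c, p < c < q /\ h q - h p = h' c * (q - p).
Proof.
  intros Hp Hpq Hq HD.
  set (g := fun t => h (clamp a b t)).
  assert (Hab : a <= b) by lra.
  assert (Hd : forall c, p < c < q -> derivable_pt_lim g c (h' c)).
  { intros c Hc. apply deriv_clamp. lra. apply HD. unfold Icc; lra. }
  assert (pr1 : forall c, p < c < q -> derivable_pt g c).
  { intros c Hc. exists (h' c). apply Hd; auto. }
  assert (pr2 : forall c, p < c < q -> derivable_pt id c).
  { intros c Hc. apply derivable_pt_id. }
  assert (Hcg : forall c, p <= c <= q -> continuity_pt g c).
  { intros c _. apply cont_clamp; auto. intros y Hy. eapply cont_deriv. apply HD; auto. }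
  assert (Hci : forall c, p <= c <= q -> continuity_pt id c).
  { intros. apply derivable_continuous_pt, derivable_pt_id. }
  destruct (MVT g id p q pr1 pr2 Hpq Hcg Hci) as [c [P E]].
  exists c. split; auto.
  rewrite (derive_pt_eq_0 g c (h' c) (pr1 c P) (Hd c P)) in E.
  rewrite (derive_pt_eq_0 id c 1 (pr2 c P) (derivable_pt_lim_id c)) in E.
  unfold g, id in E. rewrite !clamp_id in E by (unfold Icc; lra). lra.
Qed.

Lemma finite_choice (P : nat -> R -> Prop) n :
  (forall i, (i <= n)%nat -> exists y, P i y) -> exists g, forall i, (i <= n)%nat -> P i (g i).
Proof.
  induction n; intros H.
  - destruct (H 0%nat (le_n 0)) as [y Hy]. exists (fun _ => y). intros i Hi.
    replace i with 0%nat by lia. auto.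
  - destruct IHn as [g Hg]. { intros. apply H. lia. }
    destruct (H (S n) (le_n _)) as [y Hy].
    exists (fun i => if Nat.eqb i (S n) then y else g i). intros i Hi.
    destruct (Nat.eqb_spec i (S n)). subst; auto. apply Hg. lia.
Qed.

Lemma rolle_count a b : forall k G (y : nat -> R), Chain a b k G ->
  (forall i, (i < k)%nat -> y (S i) < y i) ->
  (forall i, (i <= k)%nat -> Icc a b (y i)) ->
  (forall i, (i <= k)%nat -> G 0%nat (y i) = 0) ->
  exists xi, Icc a b xi /\ G k xi = 0.
Proof.
  induction k; intros G y HC Hdec Hin Hz.
  - exists (y 0%nat). split. apply Hin; lia. apply Hz; lia.
  - destruct (finite_choice (fun i e => y (S i) < e < y i /\ G 1%nat e = 0) k) as [eta Heta].
    { intros i Hi.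
      assert (Hi1 := Hin (S i) ltac:(lia)). assert (Hi0 := Hin i ltac:(lia)).
      unfold Icc in Hi1, Hi0.
      destruct (MVT_Icc a b (G 0%nat) (G 1%nat) (y (S i)) (y i)) as [c [Hc E]].
      lra. apply Hdec; lia. lra.
      { intros x Hx. apply HC; auto; lia. }
      exists c. split; auto. rewrite !Hz in E by lia.
      assert (0 < y i - y (S i)) by (apply Rlt_Rminus, Hdec; lia).
      apply (Rmult_eq_reg_r (y i - y (S i))); lra. }
    destruct (IHk (fun j => G (S j)) eta) as [xi [Hxi E]].
    + intros j x Hj Hx. apply HC; auto. lia.
    + intros i Hi. destruct (Heta i ltac:(lia)) as [[A1 A2] _].
      destruct (Heta (S i) ltac:(lia)) as [[B1 B2] _]. lra.
    + intros i Hi. destruct (Heta i Hi) as [[A1 A2] _].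
      assert (Hi1 := Hin (S i) ltac:(lia)). assert (Hi0 := Hin i ltac:(lia)).
      unfold Icc in *. lra.
    + intros i Hi. apply Heta; auto.
    + exists xi. auto.
Qed.

Fixpoint peval (p : list R) (t : R) : R :=
  match p with nil => 0 | c :: q => c + t * peval q t end.

Fixpoint padd (p q : list R) : list R :=
  match p, q with
  | nil, _ => q
  | _, nil => p
  | c :: p', d :: q' => (c + d) :: padd p' q'
  end.

Definition pscale (al : R) (p : list R) := map (fun c => al * c) p.
Definition mul_lin (z : R) (p : list R) := padd (0 :: p) (pscale (- z) p).
Fixpoint monom (m : nat) : list R := match m with O => [1] | S m' => 0 :: monom m' end.

Fixpoint Dh (n : nat) (p : list R) : list R :=
  match p with nil => nil | c :: q => (INR n * c) :: Dh (S n) q end.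
Definition pD (p : list R) := match p with nil => nil | _ :: q => Dh 1 q end.
Fixpoint Ih (n : nat) (p : list R) : list R :=
  match p with nil => nil | c :: q => (c / INR n) :: Ih (S n) q end.
Definition pI (p : list R) := 0 :: Ih 1 p.

Lemma peval_padd p q t : peval (padd p q) t = peval p t + peval q t.
Proof. revert q; induction p; destruct q; simpl; try ring. rewrite IHp. ring. Qed.
Lemma length_padd p q : length (padd p q) = Nat.max (length p) (length q).
Proof. revert q; induction p; destruct q; simpl; auto. Qed.
Lemma peval_pscale al p t : peval (pscale al p) t = al * peval p t.
Proof. unfold pscale. induction p; simpl; try ring. rewrite IHp. ring. Qed.
Lemma length_pscale al p : length (pscale al p) = length p.
Proof. apply length_map. Qed.
Lemma peval_mul_lin z p t : peval (mul_lin z p) t = (t - z) * peval p t.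
Proof. unfold mul_lin. rewrite peval_padd, peval_pscale. simpl. ring. Qed.
Lemma length_mul_lin z p : (length (mul_lin z p) <= S (length p))%nat.
Proof. unfold mul_lin. rewrite length_padd, length_pscale. simpl length. apply Nat.max_lub; lia. Qed.
Lemma peval_monom m t : peval (monom m) t = t ^ m.
Proof. induction m; simpl; try ring. rewrite IHm. ring. Qed.
Lemma length_monom m : length (monom m) = S m.
Proof. induction m; simpl; auto. Qed.
Lemma length_Dh n p : length (Dh n p) = length p.
Proof. revert n; induction p; simpl; auto. Qed.
Lemma length_pD p : length (pD p) = pred (length p).
Proof. destruct p; simpl; auto. apply length_Dh. Qed.
Lemma length_pI p : length (pI p) = S (length p).
Proof. unfold pI. simpl. f_equal. generalize 1%nat. induction p; simpl; auto. Qed.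
Lemma Dh_Ih n p : (1 <= n)%nat -> Dh n (Ih n p) = p.
Proof.
  revert n; induction p; intros n Hn; simpl; auto. rewrite IHp by lia. f_equal.
  field. apply not_0_INR. lia.
Qed.
Lemma pD_pI p : pD (pI p) = p.
Proof. unfold pI, pD. apply Dh_Ih. lia. Qed.

Lemma deriv_eq f g x l l' : derivable_pt_lim f x l -> l = l' -> (forall z, f z = g z) ->
  derivable_pt_lim g x l'.
Proof. intros H E H2. subst. eapply derivable_pt_lim_ext; eauto. Qed.

Lemma Dh_deriv : forall p n t, (1 <= n)%nat ->
  derivable_pt_lim (fun s => s ^ n * peval p s) t (t ^ (n - 1) * peval (Dh n p) t).
Proof.
  induction p; intros n t Hn; simpl.
  - eapply deriv_eq. apply derivable_pt_lim_const with (a := 0). ring.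
    intros; unfold fct_cte; ring.
  - eapply deriv_eq.
    apply derivable_pt_lim_plus.
    apply derivable_pt_lim_scal with (a := a). apply (derivable_pt_lim_pow t n).
    apply (IHp (S n) t). lia.
    2: { intro z. unfold mult_real_fct, plus_fct. simpl. ring. }
    replace (Init.Nat.pred n) with (n - 1)%nat by lia.
    replace (S n - 1)%nat with (S (n - 1)) by lia. simpl. idtac. ring.
Qed.

Lemma pD_deriv p t : derivable_pt_lim (peval p) t (peval (pD p) t).
Proof.
  destruct p as [|c q]; simpl.
  - eapply deriv_eq. apply derivable_pt_lim_const with (a := 0). auto. intros; reflexivity.
  - eapply deriv_eq. apply derivable_pt_lim_plus.
    apply derivable_pt_lim_const with (a := c). apply (Dh_deriv q 1 t). lia.
    simpl. ring. intro z. unfold plus_fct, fct_cte. simpl. ring.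
Qed.

Lemma glob_D_in f f' x D : derivable_pt_lim f x (f' x) -> D_in f f' D x.
Proof.
  intro H. apply derivable_pt_lim_D_in in H. eapply limit1_imp; [|exact H].
  intros y [_ Hy]. split; [constructor|auto].
Qed.

Lemma poly_chain a b k p : Chain a b k (fun j t => peval (Nat.iter j pD p) t).
Proof. intros j x _ _. apply glob_D_in. simpl. apply pD_deriv. Qed.

Lemma iter_pD_nil : forall j p, (length p <= j)%nat -> Nat.iter j pD p = nil.
Proof.
  induction j; intros p Hp.
  - destruct p; simpl in *; auto; lia.
  - rewrite Nat.iter_succ_r. apply IHj. rewrite length_pD. lia.
Qed.

Fixpoint pc (k j : nat) : R := match j with O => 1 | S j' => pc k j' * INR (k - j') end.

Lemma pc_pos k j : (j <= k)%nat -> 0 < pc k j.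
Proof.
  induction j; intros; simpl. lra. apply Rmult_lt_0_compat. apply IHj; lia.
  apply lt_0_INR. lia.
Qed.

Lemma pow_chain a b k : Chain a b k (fun j t => pc k j * t ^ (k - j)).
Proof.
  intros j x _ _. apply glob_D_in. simpl.
  eapply deriv_eq. apply derivable_pt_lim_scal with (a := pc k j). apply derivable_pt_lim_pow.
  2: intro; reflexivity.
  replace (Init.Nat.pred (k - j)) with (k - S j)%nat by lia. ring.
Qed.

Lemma chain_minus a b k F G : Chain a b k F -> Chain a b k G ->
  Chain a b k (fun j t => F j t - G j t).
Proof. intros HF HG j x Hj Hx. apply Dminus; auto. Qed.

Lemma chain_scal a b k F al : Chain a b k F -> Chain a b k (fun j t => al * F j t).
Proof. intros HF j x Hj Hx. apply Dmult_const; auto. Qed.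

Lemma chain_shift a b k F : Chain a b (S k) F -> Chain a b k (fun j => F (S j)).
Proof. intros HF j x Hj Hx. apply HF; auto; lia. Qed.

Lemma sum1n_ext f g n : (forall i, (1 <= i <= n)%nat -> f i = g i) -> sum1n f n = sum1n g n.
Proof. induction n; intros H; simpl; auto. f_equal. apply IHn; intros; apply H; lia. apply H; lia. Qed.
Lemma sum1n_plus f g n : sum1n (fun i => f i + g i) n = sum1n f n + sum1n g n.
Proof. induction n; simpl; try ring. rewrite IHn. ring. Qed.
Lemma sum1n_minus f g n : sum1n (fun i => f i - g i) n = sum1n f n - sum1n g n.
Proof. induction n; simpl; try ring. rewrite IHn. ring. Qed.
Lemma sum1n_scal c f n : sum1n (fun i => c * f i) n = c * sum1n f n.
Proof. induction n; simpl; try ring. rewrite IHn. ring. Qed.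
Lemma sum1n_zero f n : (forall i, (1 <= i <= n)%nat -> f i = 0) -> sum1n f n = 0.
Proof. induction n; intros H; simpl. auto. rewrite IHn by (intros; apply H; lia). rewrite H by lia. ring. Qed.
Lemma sum1n_nonneg f n : (forall i, (1 <= i <= n)%nat -> 0 <= f i) -> 0 <= sum1n f n.
Proof. induction n; intros H; simpl. lra. assert (0 <= f (S n)) by (apply H; lia). assert (0 <= sum1n f n) by (apply IHn; intros; apply H; lia). lra. Qed.
Lemma sum1n_pos f n i0 : (1 <= i0 <= n)%nat -> 0 < f i0 ->
  (forall i, (1 <= i <= n)%nat -> 0 <= f i) -> 0 < sum1n f n.
Proof.
  induction n; intros Hi0 Hp H; simpl. lia.
  destruct (Nat.eq_dec i0 (S n)).
  - subst. assert (0 <= sum1n f n) by (apply sum1n_nonneg; intros; apply H; lia). lra.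
  - assert (0 < sum1n f n) by (apply IHn; auto; try lia; intros; apply H; lia).
    assert (0 <= f (S n)) by (apply H; lia). lra.
Qed.

Definition sdec (z : nat -> R) (lo hi : nat) := forall l, (lo <= l)%nat -> (l < hi)%nat -> z (S l) < z l.

Lemma sdec_trans z lo hi l1 l2 : sdec z lo hi -> (lo <= l1)%nat -> (l1 < l2)%nat -> (l2 <= hi)%nat ->
  z l2 < z l1.
Proof.
  intros H H1 H12 H2. induction l2. lia.
  destruct (Nat.eq_dec l1 l2). subst. apply H; lia.
  assert (z l2 < z l1) by (apply IHl2; lia). assert (z (S l2) < z l2) by (apply H; lia). lra.
Qed.

Fixpoint omg (z : nat -> R) (s : nat) (t : R) : R :=
  match s with O => 1 | S s' => omg z s' t * (t - z (S s')) end.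

Lemma omg_zero z s l : (1 <= l <= s)%nat -> omg z s (z l) = 0.
Proof.
  induction s; intros; simpl. lia. destruct (Nat.eq_dec l (S s)). subst. ring.
  rewrite IHs by lia. ring.
Qed.

Lemma omg_nz z s t : (forall l, (1 <= l <= s)%nat -> t <> z l) -> omg z s t <> 0.
Proof.
  induction s; intros H; simpl. lra. apply Rmult_integral_contrapositive. split.
  apply IHs; intros; apply H; lia. assert (t <> z (S s)) by (apply H; lia). lra.
Qed.

Lemma omg_decomp z : forall s, exists r, (length r <= s)%nat /\ forall t, omg z s t = t ^ s + peval r t.
Proof.
  induction s.
  - exists nil. split. simpl; lia. intros; simpl; ring.
  - destruct IHs as [r [Hl Hr]].
    exists (padd (pscale (- z (S s)) (monom s)) (mul_lin (z (S s)) r)). split.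
    + rewrite length_padd, length_pscale, length_monom. pose proof (length_mul_lin (z (S s)) r).
      apply Nat.max_lub; lia.
    + intro t. simpl. rewrite peval_padd, peval_pscale, peval_mul_lin, peval_monom, Hr. ring.
Qed.

Lemma omg_list z s : exists q, (length q <= S s)%nat /\ forall t, peval q t = omg z s t.
Proof.
  destruct (omg_decomp z s) as [r [Hl Hr]]. exists (padd (monom s) r). split.
  rewrite length_padd, length_monom. apply Nat.max_lub; lia.
  intro. rewrite peval_padd, peval_monom, Hr. auto.
Qed.

Lemma interp z : forall s, sdec z 1 s -> forall v : nat -> R,
  exists P, (length P <= s)%nat /\ forall l, (1 <= l <= s)%nat -> peval P (z l) = v l.
Proof.
  induction s; intros Hz v.
  - exists nil. split. simpl; lia. intros; lia.
  - destruct (IHs) with (v := v) as [P [HP HPv]]. { intros l H1 H2. apply Hz; lia. }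
    destruct (omg_list z s) as [q [Hq Hqe]].
    set (al := (v (S s) - peval P (z (S s))) / omg z s (z (S s))).
    assert (Hnz : omg z s (z (S s)) <> 0).
    { apply omg_nz. intros l Hl. assert (z (S s) < z l) by (apply (sdec_trans z 1 (S s)); auto; lia). lra. }
    exists (padd P (pscale al q)). split.
    + rewrite length_padd, length_pscale. apply Nat.max_lub; lia.
    + intros l Hl. rewrite peval_padd, peval_pscale, Hqe.
      destruct (Nat.eq_dec l (S s)).
      * subst. unfold al. field. auto.
      * rewrite omg_zero by lia. rewrite HPv by lia. ring.
Qed.

Lemma insert_pt z t : forall k, sdec z 1 k -> (forall l, (1 <= l <= k)%nat -> t <> z l) ->
  exists y, sdec y 0 k /\ forall i, (i <= k)%nat -> y i = t \/ exists l, (1 <= l <= k)%nat /\ y i = z l.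
Proof.
  induction k; intros Hz Ht.
  - exists (fun _ => t). split. intros l _ H; lia. intros; auto.
  - destruct (Rlt_dec (z (S k)) t) as [Hlt|Hge].
    + destruct IHk as [y [Hy Hym]]. { intros l H1 H2; apply Hz; lia. } { intros; apply Ht; lia. }
      exists (fun i => if Nat.eqb i (S k) then z (S k) else y i). split.
      * intros l H1 H2. destruct (Nat.eqb_spec (S l) (S k)); destruct (Nat.eqb_spec l (S k)); try lia.
        -- assert (l = k) by lia. subst l. destruct (Hym k (le_n _)) as [E|[l [Hl E]]]; rewrite E; auto.
           apply (sdec_trans z 1 (S k)); auto; lia.
        -- apply Hy; lia.
      * intros i Hi. destruct (Nat.eqb_spec i (S k)). right. exists (S k). split; auto; lia.
        destruct (Hym i ltac:(lia)) as [E|[l [Hl E]]]; auto. right. exists l. split; auto; lia.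
    + assert (t <> z (S k)) by (apply Ht; lia).
      exists (fun i => if Nat.eqb i (S k) then t else z (S i)). split.
      * intros l H1 H2. destruct (Nat.eqb_spec (S l) (S k)); destruct (Nat.eqb_spec l (S k)); try lia.
        -- assert (l = k) by lia. subst l. lra.
        -- apply Hz; lia.
      * intros i Hi. destruct (Nat.eqb_spec i (S k)); auto. right. exists (S i). split; auto; lia.
Qed.

Lemma moment_poly (w x : nat -> R) n k :
  (forall j, (j < k)%nat -> sum1n (fun i => w i * x i ^ j) n = 0) ->
  forall p j, (length p + j <= k)%nat -> sum1n (fun i => w i * x i ^ j * peval p (x i)) n = 0.
Proof.
  intros Hm p. induction p; intros j Hj; simpl.
  - apply sum1n_zero. intros; ring.
  - rewrite (sum1n_ext _ (fun i => a * (w i * x i ^ j) + w i * x i ^ (S j) * peval p (x i))).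
    2: { intros. simpl. ring. }
    rewrite sum1n_plus, sum1n_scal, Hm, IHp; simpl in Hj; try lia. ring.
Qed.

Lemma moment_poly0 (w x : nat -> R) n k :
  (forall j, (j < k)%nat -> sum1n (fun i => w i * x i ^ j) n = 0) ->
  forall p, (length p <= k)%nat -> sum1n (fun i => w i * peval p (x i)) n = 0.
Proof.
  intros Hm p Hp. rewrite <- (moment_poly w x n k Hm p 0) by lia. apply sum1n_ext. intros; simpl; ring.
Qed.

Lemma core a b k F z : Chain a b k F -> (forall t, Icc a b t -> F k t >= 0) ->
  sdec z 1 k -> (forall l, (1 <= l <= k)%nat -> Icc a b (z l)) ->
  exists P, (length P <= k)%nat /\ (forall l, (1 <= l <= k)%nat -> F 0%nat (z l) = peval P (z l)) /\
    forall t, Icc a b t -> (F 0%nat t - peval P t) * omg z k t >= 0.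
Proof.
  intros HF Hk Hz Hzi.
  destruct (interp z k Hz (fun l => F 0%nat (z l))) as [P [HPl HPv]].
  exists P. split; auto. split. intros; rewrite HPv; auto.
  intros t Ht.
  destruct (Classical_Prop.classic (exists l, (1 <= l <= k)%nat /\ t = z l)) as [[l [Hl E]]|Hn].
  - subst t. rewrite <- HPv by auto. unfold Rminus. rewrite Rplus_opp_r. lra.
  - assert (Htz : forall l, (1 <= l <= k)%nat -> t <> z l).
    { intros l Hl E. apply Hn. exists l. auto. }
    pose proof (omg_nz z k t Htz) as Hw.
    set (E := (F 0%nat t - peval P t) / omg z k t).
    destruct (omg_decomp z k) as [r [Hr Hre]].
    set (Q := padd P (pscale E r)).
    set (G := fun j s => (F j s - E * (pc k j * s ^ (k - j))) - peval (Nat.iter j pD Q) s).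
    assert (HG : Chain a b k G).
    { apply chain_minus. apply chain_minus; auto. apply chain_scal, pow_chain. apply poly_chain. }
    assert (HG0 : forall s, G 0%nat s = F 0%nat s - peval P s - E * omg z k s).
    { intro s. unfold G, Q. simpl Nat.iter. rewrite peval_padd, peval_pscale, Hre.
      replace (k - 0)%nat with k by lia. simpl. ring. }
    destruct (insert_pt z t k Hz Htz) as [y [Hy Hym]].
    destruct (rolle_count a b k G y HG) as [xi [Hxi Hxi0]].
    + intros i Hi. apply Hy; lia.
    + intros i Hi. destruct (Hym i Hi) as [E1|[l [Hl E1]]]; rewrite E1; auto.
    + intros i Hi. rewrite HG0. destruct (Hym i Hi) as [E1|[l [Hl E1]]]; rewrite E1.
      * unfold E. field. auto.
      * rewrite omg_zero, <- HPv by auto. ring.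
    + unfold G in Hxi0. rewrite iter_pD_nil in Hxi0.
      2: { unfold Q. rewrite length_padd, length_pscale. apply Nat.max_lub; lia. }
      replace (k - k)%nat with 0%nat in Hxi0 by lia. simpl in Hxi0.
      assert (Hpc := pc_pos k k (le_n _)).
      assert (HE : E * pc k k = F k xi) by lra.
      assert (HE0 : 0 <= E).
      { specialize (Hk xi Hxi). apply (Rmult_le_reg_r (pc k k)); auto. lra. }
      replace (F 0%nat t - peval P t) with (E * omg z k t).
      2: { unfold E. field. auto. }
      replace (E * omg z k t * omg z k t) with (E * (omg z k t * omg z k t)) by ring.
      apply Rle_ge, Rmult_le_pos; auto. apply Rle_0_sqr.
Qed.

Lemma m1pow_sq j : (-1) ^ j * (-1) ^ j = 1.
Proof. induction j; simpl. ring. replace (-1 * (-1) ^ j * (-1 * (-1) ^ j)) with ((-1)^j * (-1)^j) by ring. auto. Qed.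

Lemma omg_sign z : forall s j t, sdec z 1 s -> (j <= s)%nat ->
  ((1 <= j)%nat -> t < z j) -> ((j < s)%nat -> z (S j) < t) -> 0 < (-1) ^ j * omg z s t.
Proof.
  induction s; intros j t Hz Hj H1 H2.
  - replace j with 0%nat by lia. simpl. lra.
  - simpl omg. destruct (Nat.eq_dec j (S s)).
    + subst j. assert (Ht : t < z (S s)) by (apply H1; lia).
      assert (0 < (-1) ^ s * omg z s t).
      { apply IHs.
        - intros l A B; apply Hz; lia.
        - lia.
        - intros. assert (z (S s) < z s) by (apply Hz; lia). lra.
        - intros; lia. }
      simpl. replace (-1 * (-1) ^ s * (omg z s t * (t - z (S s)))) with
        (((-1) ^ s * omg z s t) * (z (S s) - t)) by ring.
      apply Rmult_lt_0_compat; lra.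
    + assert (Ht : z (S s) < t).
      { destruct (Nat.eq_dec j s). subst. apply H2; lia.
        assert (z (S s) < z (S j)) by (apply (sdec_trans z 1 (S s)); auto; lia).
        assert (z (S j) < t) by (apply H2; lia). lra. }
      assert (0 < (-1) ^ j * omg z s t).
      { apply IHs; try (intros l A B; apply Hz; lia); try lia; auto; intros; apply H2; lia. }
      replace ((-1) ^ j * (omg z s t * (t - z (S s)))) with
        (((-1) ^ j * omg z s t) * (t - z (S s))) by ring.
      apply Rmult_lt_0_compat; lra.
Qed.

Lemma sc_map (c c' : nat -> R) N N' phi K : (1 <= N)%nat ->
  (forall i, (1 <= i <= N')%nat -> c' i <> 0 -> (1 <= phi i <= N)%nat /\ c (phi i) * c' i > 0) ->
  (forall i j, (1 <= i)%nat -> (i < j)%nat -> (j <= N')%nat -> c' i * c' j < 0 -> (phi i < phi j)%nat) ->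
  at_most_sign_changes c N K -> at_most_sign_changes c' N' K.
Proof.
  intros HN Hphi Hmono HK m [idx [H1 [H2 H3]]].
  destruct m as [|m].
  - apply HK. exists (fun _ => 1%nat). repeat split; intros; lia.
  - apply HK. exists (fun l => phi (idx l)).
    assert (Hnz : forall l, (1 <= l <= S m + 1)%nat -> c' (idx l) <> 0).
    { intros l Hl E. destruct (Nat.eq_dec l (S m + 1)).
      - specialize (H3 (S m) ltac:(lia)). replace (S m + 1)%nat with l in H3 by lia.
        rewrite E in H3. lra.
      - specialize (H3 l ltac:(lia)). rewrite E in H3. lra. }
    split; [|split].
    + intros l Hl. apply (Hphi (idx l)); auto.
    + intros l Hl. apply Hmono. apply H1; lia. apply H2; lia. apply H1; lia. apply H3; lia.
    + intros l Hl.
      destruct (Hphi (idx l)) as [_ A]. apply H1; lia. apply Hnz; lia.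
      destruct (Hphi (idx (l + 1)%nat)) as [_ B]. apply H1; lia. apply Hnz; lia.
      specialize (H3 l Hl).
      set (u := c (phi (idx l))) in *. set (v := c (phi (idx (l+1)%nat))) in *.
      set (u' := c' (idx l)) in *. set (v' := c' (idx (l+1)%nat)) in *.
      assert (0 < (u * u') * (v * v')) by (apply Rmult_lt_0_compat; lra).
      destruct (Rlt_dec (u * v) 0); auto.
      assert (0 <= u * v) by lra.
      assert ((u * v) * (u' * v') <= 0) by nra.
      nra.
Qed.

Lemma am_restrict c N N2 K : (1 <= N)%nat -> (N <= N2)%nat ->
  at_most_sign_changes c N2 K -> at_most_sign_changes c N K.
Proof.
  intros H1 H2. apply sc_map with (phi := fun i => i). lia.
  intros i Hi Hn. split. lia. assert (0 < Rsqr (c i)) by (apply Rsqr_pos_lt; auto). unfold Rsqr in *. lra. intros; lia.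
Qed.

Lemma blocks (c : nat -> R) K : forall N', c 1%nat > 0 ->
  at_most_sign_changes c (S N') K ->
  exists s p, (Z.of_nat s <= K)%Z /\ p 0%nat = 1%nat /\ p (S s) = S (S N') /\
    (forall j, (j <= s)%nat -> (p j < p (S j))%nat) /\
    (forall j, (j <= s)%nat -> c (p j) * (-1) ^ j > 0) /\
    (forall j i, (j <= s)%nat -> (p j <= i < p (S j))%nat -> c i * (-1) ^ j >= 0).
Proof.
  induction N'; intros Hc1 HK.
  - exists 0%nat, (fun j => if Nat.eqb j 0 then 1%nat else 2%nat).
    split. { apply HK. exists (fun _ => 1%nat). repeat split; intros; lia. }
    split. auto. split. auto. split. intros j Hj. replace j with 0%nat by lia. simpl. lia.
    split. intros j Hj. replace j with 0%nat by lia. simpl. lra.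
    intros j i Hj Hi. replace j with 0%nat in * by lia. simpl in *. replace i with 1%nat by lia. lra.
  - destruct IHN' as [s [p [Hs [Hp0 [HpS [Hinc [Hsg Hbl]]]]]]]; auto.
    { apply am_restrict with (N2 := S (S N')); auto; lia. }
    set (i0 := S (S N')) in *.
    assert (Hmon : forall j1 j2, (j1 <= j2 <= S s)%nat -> (p j1 <= p j2)%nat).
    { intros j1 j2 H. induction j2. replace j1 with 0%nat by lia. lia.
      destruct (Nat.eq_dec j1 (S j2)). subst. lia. assert (p j2 < p (S j2))%nat by (apply Hinc; lia).
      assert (p j1 <= p j2)%nat by (apply IHj2; lia). lia. }
    destruct (Rle_dec 0 (c i0 * (-1) ^ s)) as [Hle|Hlt].
    + exists s, (fun j => if Nat.eqb j (S s) then S i0 else p j).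
      split; auto. split. simpl. auto. split. rewrite Nat.eqb_refl. auto.
      split. { intros j Hj. destruct (Nat.eqb_spec (S j) (S s)); destruct (Nat.eqb_spec j (S s)); try lia.
               assert (j = s) by lia. subst j. assert (p s < p (S s))%nat by (apply Hinc; lia). lia. apply Hinc; lia. }
      split. { intros j Hj. destruct (Nat.eqb_spec j (S s)); try lia. apply Hsg; auto. }
      intros j i Hj Hi. destruct (Nat.eqb_spec j (S s)); try lia.
      destruct (Nat.eqb_spec (S j) (S s)).
      * assert (j = s) by lia. subst j. destruct (Nat.eq_dec i i0). subst. lra. apply Hbl; lia.
      * apply Hbl; lia.
    + exists (S s), (fun j => if Nat.eqb j (S (S s)) then S i0 else p j).
      split.
      { apply HK. exists (fun l => p (l - 1)%nat). split; [|split].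
        - intros l Hl. assert (p 0%nat <= p (l - 1)%nat <= p (S s))%nat by (split; apply Hmon; lia). lia.
        - intros l Hl. replace (l + 1 - 1)%nat with l by lia. replace l with (S (l - 1)) at 2 by lia.
          apply Hinc; lia.
        - intros l Hl. replace (l + 1 - 1)%nat with l by lia.
          assert (A : c (p (l - 1)%nat) * (-1) ^ (l - 1) > 0) by (apply Hsg; lia).
          assert (B : c (p l) * (-1) ^ l > 0).
          { destruct (Nat.eq_dec l (S s)). subst l. rewrite HpS. simpl. lra. apply Hsg; lia. }
          replace l with (S (l - 1)) in B at 2 by lia. simpl in B.
          pose proof (m1pow_sq (l - 1)). set (u := (-1) ^ (l - 1)) in *.
          set (A1 := c (p (l-1)%nat)) in *. set (B1 := c (p l)) in *.
          assert (0 < (A1 * u) * (B1 * (-1 * u))) by (apply Rmult_lt_0_compat; lra).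
          replace ((A1 * u) * (B1 * (-1 * u))) with (- (A1 * B1) * (u * u)) in H0 by ring.
          rewrite H in H0. lra. }
      split. simpl. auto. split. rewrite Nat.eqb_refl. auto.
      split. { intros j Hj. destruct (Nat.eqb_spec (S j) (S (S s))); destruct (Nat.eqb_spec j (S (S s))); try lia.
               assert (j = S s) by lia. subst j. lia. apply Hinc; lia. }
      split. { intros j Hj. destruct (Nat.eqb_spec j (S (S s))); try lia.
               destruct (Nat.eq_dec j (S s)). subst j. rewrite HpS. simpl. lra. apply Hsg; lia. }
      intros j i Hj Hi. destruct (Nat.eqb_spec j (S (S s))); try lia.
      destruct (Nat.eqb_spec (S j) (S (S s))).
      * assert (j = S s) by lia. subst j. rewrite HpS in Hi. replace i with i0 by lia. simpl. lra.
      * apply Hbl; lia.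
Qed.

Lemma sgn_comb A u B C : u * u = 1 -> A * u >= 0 -> 0 < u * B -> B * C >= 0 -> A * C >= 0.
Proof.
  intros Hu H1 H2 H3.
  assert (H : 0 <= (A * u) * (u * B) * (B * C)).
  { apply Rmult_le_pos. apply Rmult_le_pos; lra. lra. }
  replace ((A * u) * (u * B) * (B * C)) with ((A * C) * (B * B) * (u * u)) in H by ring.
  rewrite Hu, Rmult_1_r in H.
  assert (HB : 0 < B * B).
  { assert (B <> 0). { intro E. subst. lra. } apply Rsqr_pos_lt in H0. unfold Rsqr in H0. lra. }
  destruct (Rle_dec 0 (A * C)). lra.
  assert ((A * C) * (B * B) < 0). { apply Rmult_neg_pos; lra. } lra.
Qed.



Lemma find_block (p : nat -> nat) : forall s i, (forall j, (j <= s)%nat -> (p j < p (S j))%nat) ->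
  (p 0%nat <= i < p (S s))%nat -> exists j, (j <= s)%nat /\ (p j <= i < p (S j))%nat.
Proof.
  induction s; intros i Hinc Hi.
  - exists 0%nat. split; auto. 
  - destruct (Nat.lt_ge_cases i (p (S s))).
    + destruct (IHs i) as [j [Hj Hj2]]. intros; apply Hinc; lia. lia. exists j. split; auto.
    + exists (S s). split; auto. lia.
Qed.

Lemma pinc_mon (p : nat -> nat) s : (forall j, (j <= s)%nat -> (p j < p (S j))%nat) ->
  forall j1 j2, (j1 <= j2 <= S s)%nat -> (p j1 <= p j2)%nat.
Proof.
  intros Hinc j1 j2 H. induction j2. replace j1 with 0%nat by lia. lia.
  destruct (Nat.eq_dec j1 (S j2)). subst. lia. assert (p j2 < p (S j2))%nat by (apply Hinc; lia).
  assert (p j1 <= p j2)%nat by (apply IHj2; lia). lia.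
Qed.

Lemma abel1 (w g : nat -> R) : forall n,
  sum1n (fun i => w i * g i) n = sum1n (fun m => sum1n w m * (g m - g (S m))) n + sum1n w n * g (S n).
Proof. induction n; simpl. ring. rewrite IHn. ring. Qed.

Lemma sum1n_S f n : sum1n f (S n) = sum1n f n + f (S n).
Proof. reflexivity. Qed.

Lemma abel2 (T d : nat -> R) : forall N, (1 <= N)%nat ->
  sum1n (fun m => (T (S m) - T m) * d m) N =
  T (S N) * d N - T 1%nat * d 1%nat + sum1n (fun m => T (S m) * (d m - d (S m))) (N - 1).
Proof.
  induction N; intros HN. lia. destruct N. simpl. ring.
  rewrite sum1n_S, IHN by lia. replace (S (S N) - 1)%nat with (S N) by lia.
  replace (S N - 1)%nat with N by lia. rewrite (sum1n_S _ N). ring.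
Qed.

Lemma case1 a b n k x w F :
  (2 <= n)%nat -> sdec x 1 n -> (forall i, (1 <= i <= n)%nat -> Icc a b (x i)) ->
  w 1%nat > 0 -> (1 <= k)%nat ->
  (forall j, (j < k)%nat -> sum1n (fun i => w i * x i ^ j) n = 0) ->
  Chain a b k F -> (forall t, Icc a b t -> F k t >= 0) ->
  at_most_sign_changes w n (Z.of_nat k) ->
  sum1n (fun i => w i * F 0%nat (x i)) n >= 0.
Proof.
  intros Hn Hx Hxi Hw1 Hk Hm HF HFk Hsc.
  destruct n as [|n']. lia.
  destruct (blocks w (Z.of_nat k) n' Hw1 Hsc) as [s [p [Hs [Hp0 [HpS [Hinc [Hsg Hbl]]]]]]].
  pose proof (pinc_mon p s Hinc) as Hmon.
  set (z := fun l => x (p l)).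
  assert (Hpr : forall l, (l <= s)%nat -> (1 <= p l <= S n')%nat).
  { intros l Hl. assert (p 0%nat <= p l)%nat by (apply Hmon; lia).
    assert (p l < p (S s))%nat. { assert (p l <= p s)%nat by (apply Hmon; lia). assert (p s < p (S s))%nat by (apply Hinc; lia). lia. }
    lia. }
  assert (Hz : sdec z 1 s).
  { intros l H1 H2. unfold z. apply (sdec_trans x 1 (S n')); auto.
    apply Hpr; lia. apply Hinc; lia. apply Hpr; lia. }
  assert (Hzi : forall l, (1 <= l <= s)%nat -> Icc a b (z l)).
  { intros l Hl. apply Hxi. apply Hpr; lia. }
  assert (Key : forall i, (1 <= i <= S n')%nat ->
    (exists l, (1 <= l <= s)%nat /\ x i = z l) \/
    (exists j, w i * (-1) ^ j >= 0 /\ 0 < (-1) ^ j * omg z s (x i))).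
  { intros i Hi. destruct (find_block p s i Hinc) as [j [Hj Hji]]. lia.
    destruct (Nat.eq_dec i (p j)) as [E|NE].
    - destruct j as [|j']. right. exists 0%nat. split. apply Hbl; auto.
      apply omg_sign; [exact Hz | lia | intros; lia | ].
      intros. unfold z. apply (sdec_trans x 1 (S n')); auto. lia. lia.
      assert (p 1 <= S n')%nat by (apply Hpr; lia). lia.
      left. exists (S j'). split. lia. unfold z. rewrite E. auto.
    - right. exists j. split. apply Hbl; auto. apply omg_sign; [exact Hz | lia | |].
      + intros. unfold z. apply (sdec_trans x 1 (S n')); [auto | pose proof (Hpr j ltac:(lia)); lia | lia | lia].
      + intros. unfold z. apply (sdec_trans x 1 (S n')); [auto | lia | lia | pose proof (Hpr (S j) ltac:(lia)); lia]. }
  assert (Hu : forall j, (-1) ^ j * (-1) ^ j = 1) by apply m1pow_sq.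
  destruct (Nat.lt_ge_cases s k) as [Hlt|Hge].
  - exfalso. destruct (omg_list z s) as [q [Hq Hqe]].
    assert (H0 : sum1n (fun i => w i * peval q (x i)) (S n') = 0) by (apply (moment_poly0 w x _ k); auto; lia).
    assert (H1 : 0 < sum1n (fun i => w i * peval q (x i)) (S n')).
    { apply (sum1n_pos _ _ 1%nat). lia.
      - rewrite Hqe. apply Rmult_lt_0_compat. lra.
        assert (0 < (-1) ^ 0 * omg z s (x 1%nat)).
        { apply omg_sign; [exact Hz | lia | intros; lia | ]. intros. unfold z.
          assert (p 0%nat < p 1%nat)%nat by (apply Hinc; lia). pose proof (Hpr 1%nat ltac:(lia)).
          apply (sdec_trans x 1 (S n')); [auto | lia | lia | lia]. }
        simpl in H. lra.
      - intros i Hi. rewrite Hqe. destruct (Key i Hi) as [[l [Hl E]]|[j [A1 A2]]].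
        + rewrite E, omg_zero by auto. lra.
        + apply Rge_le. apply (sgn_comb _ ((-1)^j) (omg z s (x i))); auto.
          apply Rle_ge, Rle_0_sqr. }
    lra.
  - assert (s = k) by lia. subst s.
    destruct (core a b k F z HF HFk Hz Hzi) as [P [HPl [HPz HPs]]].
    rewrite (sum1n_ext _ (fun i => w i * (F 0%nat (x i) - peval P (x i)) + w i * peval P (x i))) by (intros; ring).
    rewrite sum1n_plus, (moment_poly0 w x _ k Hm P HPl), Rplus_0_r.
    apply Rle_ge, sum1n_nonneg. intros i Hi.
    destruct (Key i Hi) as [[l [Hl E]]|[j [A1 A2]]].
    + rewrite E, HPz by auto. lra.
    + apply Rge_le. apply (sgn_comb _ ((-1)^j) (omg z k (x i))); auto.
      rewrite Rmult_comm. apply HPs. apply Hxi; auto.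
Qed.

Lemma sdec_le x lo hi i j : sdec x lo hi -> (lo <= i)%nat -> (i <= j)%nat -> (j <= hi)%nat -> x j <= x i.
Proof. intros. destruct (Nat.eq_dec i j). subst. lra. left. apply (sdec_trans x lo hi); auto; lia. Qed.

Lemma poly_D_in a b Q y : D_in (peval Q) (peval (pD Q)) (Icc a b) y.
Proof. apply glob_D_in. apply pD_deriv. Qed.

Lemma poly_D_in_I a b P y : D_in (peval (pI P)) (peval P) (Icc a b) y.
Proof. pose proof (poly_D_in a b (pI P) y). rewrite pD_pI in H. auto. Qed.

Lemma case2 a b n k x w F :
  (2 <= n)%nat -> sdec x 1 n -> (forall i, (1 <= i <= n)%nat -> Icc a b (x i)) ->
  w 1%nat > 0 -> (1 <= k)%nat ->
  (forall j, (j < k)%nat -> sum1n (fun i => w i * x i ^ j) n = 0) ->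
  Chain a b k F -> (forall t, Icc a b t -> F k t >= 0) ->
  at_most_sign_changes (fun m => sum1n w m) n (Z.of_nat k - 1) ->
  sum1n (fun i => w i * F 0%nat (x i)) n >= 0.
Proof.
  intros Hn Hx Hxi Hw1 Hk Hm HF HFk Hsc.
  destruct n as [|n']. lia.
  set (c := fun m => sum1n w m) in *.
  assert (Hc1 : c 1%nat > 0) by (unfold c; simpl; lra).
  assert (HcN : c (S n') = 0).
  { rewrite <- (Hm 0%nat) by lia. unfold c. apply sum1n_ext. intros; simpl; ring. }
  destruct (blocks c (Z.of_nat k - 1) n' Hc1 Hsc) as [s [p [Hs [Hp0 [HpS [Hinc [Hsg Hbl]]]]]]].
  pose proof (pinc_mon p s Hinc) as Hmon.
  set (z := fun l => x (p l)).
  assert (Hpr : forall l, (l <= s)%nat -> (1 <= p l <= S n')%nat).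
  { intros l Hl. assert (p 0%nat <= p l)%nat by (apply Hmon; lia).
    assert (p l < p (S s))%nat. { assert (p l <= p s)%nat by (apply Hmon; lia). assert (p s < p (S s))%nat by (apply Hinc; lia). lia. }
    lia. }
  assert (Hz : sdec z 1 s).
  { intros l H1 H2. unfold z. apply (sdec_trans x 1 (S n')); auto.
    apply Hpr; lia. apply Hinc; lia. apply Hpr; lia. }
  assert (Hzi : forall l, (1 <= l <= s)%nat -> Icc a b (z l)).
  { intros l Hl. apply Hxi. apply Hpr; lia. }
  assert (Hu : forall j, (-1) ^ j * (-1) ^ j = 1) by apply m1pow_sq.
  assert (KeyI : forall m, (1 <= m < S n')%nat -> exists j, c m * (-1) ^ j >= 0 /\
     forall t, x (S m) < t < x m -> 0 < (-1) ^ j * omg z s t).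
  { intros m Hm1. destruct (find_block p s m Hinc) as [j [Hj Hjm]]. lia.
    exists j. split. apply Hbl; auto. intros t Ht. apply omg_sign; [exact Hz | lia | |].
    - intros. unfold z. pose proof (Hpr j ltac:(lia)).
      assert (x m <= x (p j)) by (apply (sdec_le x 1 (S n')); auto; lia). lra.
    - intros. unfold z. pose proof (Hpr (S j) ltac:(lia)).
      assert (x (p (S j)) <= x (S m)) by (apply (sdec_le x 1 (S n')); auto; lia). lra. }
  assert (Habel : forall R : R -> R, sum1n (fun i => w i * R (x i)) (S n') =
     sum1n (fun m => c m * (R (x m) - R (x (S m)))) (S n')).
  { intro R. rewrite (abel1 w (fun i => R (x i))). unfold c in *. rewrite HcN. ring. }
  assert (Hmvt : forall R R', (forall y, Icc a b y -> D_in R R' (Icc a b) y) ->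
     forall m, (1 <= m < S n')%nat -> exists xi, x (S m) < xi < x m /\
       R (x m) - R (x (S m)) = R' xi * (x m - x (S m))).
  { intros R R' HD m Hm1. assert (Hxm := Hxi m ltac:(lia)). assert (Hxm1 := Hxi (S m) ltac:(lia)).
    unfold Icc in *. apply MVT_Icc with (a := a) (b := b); auto; try lra. apply Hx; lia. }
  assert (Hterm : forall R R', (forall y, Icc a b y -> D_in R R' (Icc a b) y) ->
     (forall t, Icc a b t -> omg z s t * R' t >= 0) ->
     forall m, (1 <= m <= S n')%nat -> 0 <= c m * (R (x m) - R (x (S m)))).
  { intros R R' HD HRw m Hm1. destruct (Nat.eq_dec m (S n')). subst. rewrite HcN. lra.
    destruct (Hmvt R R' HD m ltac:(lia)) as [xi [Hxi1 Exi]]. rewrite Exi.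
    destruct (KeyI m ltac:(lia)) as [j [A1 A2]].
    assert (Hd : 0 < x m - x (S m)) by (assert (x (S m) < x m) by (apply Hx; lia); lra).
    assert (c m * R' xi >= 0).
    { apply (sgn_comb _ ((-1) ^ j) (omg z s xi)); auto. apply HRw.
      assert (Hxm := Hxi m ltac:(lia)). assert (Hxm1 := Hxi (S m) ltac:(lia)). unfold Icc in *. lra. }
    replace (c m * (R' xi * (x m - x (S m)))) with ((c m * R' xi) * (x m - x (S m))) by ring.
    apply Rmult_le_pos; lra. }
  destruct k as [|k']. lia.
  assert (Hs' : (s <= k')%nat) by lia.
  destruct (Nat.lt_ge_cases s k') as [Hlt|Hge].
  - exfalso. destruct (omg_list z s) as [q [Hq Hqe]].
    assert (H0 : sum1n (fun i => w i * peval (pI q) (x i)) (S n') = 0).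
    { apply (moment_poly0 w x _ (S k')); auto. rewrite length_pI. lia. }
    assert (HD : forall y, Icc a b y -> D_in (peval (pI q)) (peval q) (Icc a b) y) by (intros; apply poly_D_in_I).
    rewrite Habel in H0.
    assert (H1 : 0 < sum1n (fun m => c m * (peval (pI q) (x m) - peval (pI q) (x (S m)))) (S n')).
    { apply (sum1n_pos _ _ 1%nat). lia.
      - destruct (Hmvt _ _ HD 1%nat ltac:(lia)) as [xi [Hxi1 Exi]]. rewrite Exi, Hqe.
        assert (0 < (-1) ^ 0 * omg z s xi).
        { apply omg_sign; [exact Hz | lia | intros; lia | ]. intros. unfold z.
          assert (p 0%nat < p 1%nat)%nat by (apply Hinc; lia). pose proof (Hpr 1%nat ltac:(lia)).
          assert (x (p 1%nat) <= x 2%nat) by (apply (sdec_le x 1 (S n')); auto; lia). lra. }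
        simpl in H. assert (x 2%nat < x 1%nat) by (apply Hx; lia).
        apply Rmult_lt_0_compat. lra. apply Rmult_lt_0_compat; lra.
      - apply (Hterm _ _ HD). intros t Ht. rewrite Hqe. apply Rle_ge, Rle_0_sqr. }
    lra.
  - assert (s = k') by lia. subst s.
    destruct (core a b k' (fun j => F (S j)) z (chain_shift a b k' F HF) HFk Hz Hzi) as [P [HPl [HPz HPs]]].
    set (R := fun t => F 0%nat t - peval (pI P) t).
    rewrite (sum1n_ext _ (fun i => w i * R (x i) + w i * peval (pI P) (x i))) by (intros; unfold R; ring).
    rewrite sum1n_plus, (moment_poly0 w x _ (S k') Hm (pI P)), Rplus_0_r.
    2: { rewrite length_pI. lia. }
    rewrite Habel. apply Rle_ge, sum1n_nonneg.
    apply (Hterm R (fun t => F 1%nat t - peval P t)).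
    + intros y Hy. unfold R. apply Dminus. apply HF; auto; lia. apply poly_D_in_I.
    + intros t Ht. rewrite Rmult_comm. apply HPs; auto.
Qed.

Definition Tseq (w x : nat -> R) := fun m => sum1n (fun i => w i * x i) m - sum1n w m * x m.

Lemma m1pow_nonneg_1 j : 0 <= (-1) ^ j -> (-1) ^ j = 1.
Proof.
  intro H. pose proof (m1pow_sq j). set (u := (-1)^j) in *.
  assert ((u - 1) * (u + 1) = 0) by (replace ((u-1)*(u+1)) with (u*u - 1) by ring; lra).
  apply Rmult_integral in H1. destruct H1; lra.
Qed.

Lemma case3 a b n k x w F :
  (2 <= n)%nat -> sdec x 1 n -> (forall i, (1 <= i <= n)%nat -> Icc a b (x i)) ->
  w 1%nat > 0 -> (1 <= k)%nat ->
  (forall j, (j < k)%nat -> sum1n (fun i => w i * x i ^ j) n = 0) ->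
  Chain a b k F -> (forall t, Icc a b t -> F k t >= 0) ->
  (forall m, (1 <= m < n)%nat -> Tseq w x m * Tseq w x (S m) >= 0) ->
  at_most_sign_changes (Tseq w x) n (Z.of_nat k - 2) ->
  sum1n (fun i => w i * F 0%nat (x i)) n >= 0.
Proof.
  intros Hn Hx Hxi Hw1 Hk Hm HF HFk HnoX Hsc.
  set (T := Tseq w x) in *.
  set (c := fun m => sum1n w m).
  assert (HT1 : T 1%nat = 0) by (unfold T, Tseq; simpl; ring).
  assert (HcN : c n = 0).
  { rewrite <- (Hm 0%nat) by lia. unfold c. apply sum1n_ext. intros; simpl; ring. }
  assert (Hk2 : (2 <= k)%nat).
  { destruct (Nat.le_gt_cases 2 k); auto. exfalso.
    assert (Z.of_nat 0 <= Z.of_nat k - 2)%Z.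
    { apply Hsc. exists (fun _ => 1%nat). repeat split; intros; lia. }
    lia. }
  assert (HTn : T n = 0).
  { unfold T, Tseq. rewrite <- (Hm 1%nat) by lia. fold (c n). rewrite HcN.
    rewrite (sum1n_ext _ (fun i => w i * x i ^ 1)) by (intros; simpl; ring). ring. }
  assert (HTd : forall m, T (S m) - T m = c m * (x m - x (S m))).
  { intro m. unfold T, Tseq, c. rewrite !sum1n_S. ring. }
  assert (HT2 : T 2%nat > 0).
  { replace (T 2%nat) with (T 2%nat - T 1%nat) by lra. rewrite HTd. unfold c. simpl.
    assert (x 2%nat < x 1%nat) by (apply Hx; lia). apply Rmult_lt_0_compat; lra. }
  assert (Hn3 : (3 <= n)%nat).
  { destruct (Nat.eq_dec n 2). subst n. lra. lia. }
  set (cT := fun m => T (S m)).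
  assert (Hsc' : at_most_sign_changes cT (n - 1) (Z.of_nat k - 2)).
  { apply sc_map with (c := T) (N := n) (phi := S). lia.
    - intros i Hi Hnz. split. lia. unfold cT. assert (0 < Rsqr (T (S i))) by (apply Rsqr_pos_lt; auto).
      unfold Rsqr in *. lra.
    - intros; lia.
    - auto. }
  destruct n as [|[|n'']]; try lia.
  replace (S (S n'') - 1)%nat with (S n'') in Hsc' by lia.
  assert (Hc1 : cT 1%nat > 0) by (unfold cT; auto).
  destruct (blocks cT (Z.of_nat k - 2) n'' Hc1 Hsc') as [s [p [Hs [Hp0 [HpS [Hinc [Hsg Hbl]]]]]]].
  pose proof (pinc_mon p s Hinc) as Hmon.
  set (z := fun l => x (p l)).
  assert (Hpr : forall l, (l <= s)%nat -> (1 <= p l <= S n'')%nat).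
  { intros l Hl. assert (p 0%nat <= p l)%nat by (apply Hmon; lia).
    assert (p l < p (S s))%nat. { assert (p l <= p s)%nat by (apply Hmon; lia). assert (p s < p (S s))%nat by (apply Hinc; lia). lia. }
    lia. }
  assert (Hz : sdec z 1 s).
  { intros l H1 H2. unfold z. apply (sdec_trans x 1 (S (S n''))); auto.
    pose proof (Hpr l ltac:(lia)); lia. apply Hinc; lia. pose proof (Hpr (S l) ltac:(lia)); lia. }
  assert (Hzi : forall l, (1 <= l <= s)%nat -> Icc a b (z l)).
  { intros l Hl. apply Hxi. pose proof (Hpr l ltac:(lia)); lia. }
  assert (Hu : forall j, (-1) ^ j * (-1) ^ j = 1) by apply m1pow_sq.
  assert (Hzero : forall l, (1 <= l <= s)%nat -> cT (p l - 1)%nat = 0).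
  { intros l Hl.
    assert (Hpl : (p (l - 1) < p l)%nat) by (replace l with (S (l - 1)) at 2 by lia; apply Hinc; lia).
    assert (A1 : cT (p l - 1)%nat * (-1) ^ (l - 1) >= 0).
    { apply Hbl. lia. replace (S (l - 1)) with l by lia. lia. }
    assert (B1 : cT (p l) * (-1) ^ l > 0) by (apply Hsg; lia).
    assert (C1 : cT (p l - 1)%nat * cT (p l) >= 0).
    { unfold cT. replace (S (p l - 1)) with (p l) by (pose proof (Hpr 0%nat ltac:(lia)); lia).
      apply HnoX. pose proof (Hpr l ltac:(lia)); lia. }
    replace l with (S (l - 1)) in B1 at 2 by lia. simpl in B1.
    pose proof (Hu (l - 1)%nat). set (u := (-1) ^ (l - 1)) in *.
    set (A := cT (p l - 1)%nat) in *. set (B := cT (p l)) in *.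
    destruct (Req_dec A 0); auto. exfalso.
    assert (Hu0 : u <> 0) by (intro E; rewrite E in H; lra).
    assert (Au : A * u <> 0) by (apply Rmult_integral_contrapositive; auto).
    assert (0 < A * u) by lra.
    assert (0 < (A * u) * (B * (-1 * u))) by (apply Rmult_lt_0_compat; lra).
    replace ((A * u) * (B * (-1 * u))) with (- (A * B) * (u * u)) in H2 by ring. rewrite H in H2. lra. }
  assert (KeyW : forall m, (1 <= m <= S n'' - 1)%nat -> cT m = 0 \/ exists j, cT m * (-1) ^ j >= 0 /\
     forall t, x (S (S m)) < t < x m -> 0 < (-1) ^ j * omg z s t).
  { intros m Hm1. destruct (find_block p s m Hinc) as [j [Hj Hjm]]. lia.
    destruct (Nat.lt_ge_cases j s) as [Hjs|Hjs]; [destruct (Nat.eq_dec m (p (S j) - 1)) as [E|NE]|].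
    - left. rewrite E. apply Hzero. lia.
    - right. exists j. split. apply Hbl; auto. intros t Ht. apply omg_sign; [exact Hz | lia | |].
      + intros. unfold z. pose proof (Hpr j ltac:(lia)).
        assert (x m <= x (p j)) by (apply (sdec_le x 1 (S (S n''))); auto; lia). lra.
      + intros. unfold z. pose proof (Hpr (S j) ltac:(lia)).
        assert (x (p (S j)) <= x (S (S m))) by (apply (sdec_le x 1 (S (S n''))); auto; lia). lra.
    - right. exists j. split. apply Hbl; auto. intros t Ht. apply omg_sign; [exact Hz | lia | |].
      + intros. unfold z. pose proof (Hpr j ltac:(lia)).
        assert (x m <= x (p j)) by (apply (sdec_le x 1 (S (S n''))); auto; lia). lra.
      + intros; lia. }
  set (dd := fun (R : R -> R) m => (R (x m) - R (x (S m))) / (x m - x (S m))).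
  assert (Habel : forall R : R -> R, sum1n (fun i => w i * R (x i)) (S (S n'')) =
     sum1n (fun m => cT m * (dd R m - dd R (S m))) n'').
  { intro R. rewrite (abel1 w (fun i => R (x i))). fold (c (S (S n''))). rewrite HcN, Rmult_0_l, Rplus_0_r.
    rewrite sum1n_S. fold (c (S (S n''))). rewrite HcN, Rmult_0_l, Rplus_0_r.
    rewrite (sum1n_ext _ (fun m => (T (S m) - T m) * dd R m)).
    2: { intros i Hi. rewrite HTd. unfold dd, c. simpl. field.
         assert (x (S i) < x i) by (apply Hx; lia). lra. }
    rewrite abel2 by lia. replace (S n'' - 1)%nat with n'' by lia.
    rewrite HTn, HT1. unfold cT. ring. }
  assert (Hmvt : forall R R', (forall y, Icc a b y -> D_in R R' (Icc a b) y) ->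
     forall m, (1 <= m < S (S n''))%nat -> exists xi, x (S m) < xi < x m /\ dd R m = R' xi).
  { intros R R' HD m Hm1. assert (Hxm := Hxi m ltac:(lia)). assert (Hxm1 := Hxi (S m) ltac:(lia)).
    assert (x (S m) < x m) by (apply Hx; lia).
    destruct (MVT_Icc a b R R' (x (S m)) (x m)) as [xi [H1 H2]]; unfold Icc in *; try lra; auto.
    exists xi. split; auto. unfold dd. rewrite H2. field. lra. }
  assert (Hsec : forall R R' R'', (forall y, Icc a b y -> D_in R R' (Icc a b) y) ->
     (forall y, Icc a b y -> D_in R' R'' (Icc a b) y) ->
     forall m, (1 <= m <= n'')%nat -> exists eta e, x (S (S m)) < eta < x m /\ 0 < e /\
        dd R m - dd R (S m) = R'' eta * e).
  { intros R R' R'' HD1 HD2 m Hm1.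
    destruct (Hmvt R R' HD1 m ltac:(lia)) as [x1 [Hx1 E1]].
    destruct (Hmvt R R' HD1 (S m) ltac:(lia)) as [x2 [Hx2 E2]].
    assert (Ha := Hxi (S (S m)) ltac:(lia)). assert (Hb := Hxi m ltac:(lia)). unfold Icc in *.
    destruct (MVT_Icc a b R' R'' x2 x1) as [eta [H1 H2]]; unfold Icc; try lra; auto.
    exists eta, (x1 - x2). split. lra. split. lra. rewrite E1, E2, H2. ring. }
  assert (Hterm : forall R R' R'', (forall y, Icc a b y -> D_in R R' (Icc a b) y) ->
     (forall y, Icc a b y -> D_in R' R'' (Icc a b) y) ->
     (forall t, Icc a b t -> omg z s t * R'' t >= 0) ->
     forall m, (1 <= m <= n'')%nat -> 0 <= cT m * (dd R m - dd R (S m))).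
  { intros R R' R'' HD1 HD2 HRw m Hm1.
    destruct (Hsec R R' R'' HD1 HD2 m Hm1) as [eta [e [Heta [He E]]]]. rewrite E.
    destruct (KeyW m ltac:(lia)) as [Z0|[j [A1 A2]]]. rewrite Z0. lra.
    assert (cT m * R'' eta >= 0).
    { apply (sgn_comb _ ((-1) ^ j) (omg z s eta)); auto. apply HRw.
      assert (Ha := Hxi (S (S m)) ltac:(lia)). assert (Hb := Hxi m ltac:(lia)). unfold Icc in *. lra. }
    replace (cT m * (R'' eta * e)) with ((cT m * R'' eta) * e) by ring. apply Rmult_le_pos; lra. }
  destruct k as [|[|k'']]; try lia.
  assert (Hs' : (s <= k'')%nat) by lia.
  destruct (Nat.lt_ge_cases s k'') as [Hlt|Hge].
  - exfalso. destruct (omg_list z s) as [q [Hq Hqe]].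
    assert (H0 : sum1n (fun i => w i * peval (pI (pI q)) (x i)) (S (S n'')) = 0).
    { apply (moment_poly0 w x _ (S (S k''))); auto. rewrite !length_pI. lia. }
    assert (HD1 : forall y, Icc a b y -> D_in (peval (pI (pI q))) (peval (pI q)) (Icc a b) y) by (intros; apply poly_D_in_I).
    assert (HD2 : forall y, Icc a b y -> D_in (peval (pI q)) (peval q) (Icc a b) y) by (intros; apply poly_D_in_I).
    rewrite Habel in H0.
    assert (H1 : 0 < sum1n (fun m => cT m * (dd (peval (pI (pI q))) m - dd (peval (pI (pI q))) (S m))) n'').
    { apply (sum1n_pos _ _ 1%nat). lia.
      - destruct (Hsec _ _ _ HD1 HD2 1%nat ltac:(lia)) as [eta [e [Heta [He E]]]]. rewrite E, Hqe.
        destruct (KeyW 1%nat ltac:(lia)) as [Z0|[j [A1 A2]]]. lra.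
        assert (Hj1 : (-1) ^ j = 1).
        { apply m1pow_nonneg_1. destruct (Rle_dec 0 ((-1)^j)); auto.
          assert (cT 1%nat * (-1) ^ j < 0) by (apply Rmult_pos_neg; lra). lra. }
        specialize (A2 eta Heta). rewrite Hj1 in A2.
        apply Rmult_lt_0_compat. lra. apply Rmult_lt_0_compat; lra.
      - apply (Hterm _ _ _ HD1 HD2). intros t Ht. rewrite Hqe. apply Rle_ge, Rle_0_sqr. }
    lra.
  - assert (s = k'') by lia. subst s.
    destruct (core a b k'' (fun j => F (S (S j))) z (chain_shift a b k'' _ (chain_shift a b (S k'') F HF)) HFk Hz Hzi) as [P [HPl [HPz HPs]]].
    set (R := fun t => F 0%nat t - peval (pI (pI P)) t).
    rewrite (sum1n_ext _ (fun i => w i * R (x i) + w i * peval (pI (pI P)) (x i))) by (intros; unfold R; ring).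
    rewrite sum1n_plus, (moment_poly0 w x _ (S (S k'')) Hm (pI (pI P))), Rplus_0_r.
    2: { rewrite !length_pI. lia. }
    rewrite Habel. apply Rle_ge, sum1n_nonneg.
    apply (Hterm R (fun t => F 1%nat t - peval (pI P) t) (fun t => F 2%nat t - peval P t)).
    + intros y Hy. unfold R. apply Dminus. apply HF; auto; lia. apply poly_D_in_I.
    + intros y Hy. apply Dminus. apply HF; auto; lia. apply poly_D_in_I.
    + intros t Ht. rewrite Rmult_comm. apply HPs; auto.
Qed.

Definition del (q : nat) (c : nat -> R) : nat -> R := fun i => if Nat.ltb i q then c i else c (S i).

Lemma sum_del c q : forall n, (1 <= q <= n)%nat -> sum1n c n = sum1n (del q c) (n - 1) + c q.
Proof.
  induction n; intros Hq. lia.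
  destruct (Nat.eq_dec q (S n)).
  - subst. replace (S n - 1)%nat with n by lia. rewrite sum1n_S. f_equal.
    apply sum1n_ext. intros i Hi. unfold del. destruct (Nat.ltb_spec i (S n)); auto; lia.
  - rewrite sum1n_S, IHn by lia. replace (S n - 1)%nat with (S (n - 1)) by lia. rewrite sum1n_S.
    assert (E : del q c (S (n - 1)) = c (S n)).
    { unfold del. destruct (Nat.ltb_spec (S (n - 1)) q); try lia. f_equal. lia. }
    rewrite E. ring.
Qed.

Lemma DZ (x' w' x w : nat -> R) q N : (1 <= q <= S N)%nat -> w' q = 0 ->
  (forall i, x i = del q x' i) -> (forall i, w i = del q w' i) ->
  (forall h : R -> R, sum1n (fun i => w i * h (x i)) N = sum1n (fun i => w' i * h (x' i)) (S N)) /\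
  (forall m, sum1n w m = del q (fun m => sum1n w' m) m) /\
  (forall m, Tseq w x m = del q (Tseq w' x') m).
Proof.
  intros Hq Hw0 Hx Hw.
  assert (Gen : forall g g' : nat -> R, g' q = 0 -> (forall i, g i = del q g' i) ->
      forall m, sum1n g m = del q (fun m => sum1n g' m) m).
  { intros g g' Hg0 Hg m. unfold del. destruct (Nat.ltb_spec m q).
    - apply sum1n_ext. intros i Hi. rewrite Hg. unfold del. destruct (Nat.ltb_spec i q); auto; lia.
    - rewrite (sum_del g' q (S m)) by lia. rewrite Hg0, Rplus_0_r. replace (S m - 1)%nat with m by lia.
      apply sum1n_ext. intros i Hi. apply Hg. }
  split; [|split].
  - intro h. rewrite (sum_del (fun i => w' i * h (x' i)) q (S N)) by lia. rewrite Hw0, Rmult_0_l, Rplus_0_r.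
    replace (S N - 1)%nat with N by lia. apply sum1n_ext. intros i Hi. rewrite Hx, Hw. unfold del.
    destruct (Nat.ltb_spec i q); auto.
  - apply Gen; auto.
  - intro m. unfold Tseq.
    rewrite (Gen (fun i => w i * x i) (fun i => w' i * x' i)).
    2: rewrite Hw0; ring.
    2: { intro i. rewrite Hx, Hw. unfold del. destruct (Nat.ltb_spec i q); auto. }
    rewrite (Gen w w' Hw0 Hw). rewrite Hx. unfold del. destruct (Nat.ltb_spec m q); auto.
Qed.

Lemma del_am c q N K : (1 <= N)%nat -> at_most_sign_changes c (S N) K -> at_most_sign_changes (del q c) N K.
Proof.
  intros HN. apply sc_map with (phi := fun i => if Nat.ltb i q then i else S i). lia.
  - intros i Hi Hnz. unfold del in *. destruct (Nat.ltb_spec i q); split; try lia;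
    assert (0 < Rsqr (c _)) by (apply Rsqr_pos_lt; eauto); unfold Rsqr in *; lra.
  - intros i j Hi Hij Hj _. destruct (Nat.ltb_spec i q); destruct (Nat.ltb_spec j q); lia.
Qed.

Lemma ins_am c q N K : (1 <= N)%nat -> (1 <= q <= S N)%nat -> c q = 0 -> at_most_sign_changes (del q c) N K ->
  at_most_sign_changes c (S N) K.
Proof.
  intros HN HqN Hq. apply sc_map with (phi := fun i => if Nat.ltb i q then i else (i - 1)%nat). lia.
  - intros i Hi Hnz. unfold del. destruct (Nat.ltb_spec i q).
    + destruct (Nat.ltb_spec i q); try lia. split. lia.
      assert (0 < Rsqr (c i)) by (apply Rsqr_pos_lt; eauto); unfold Rsqr in *; lra.
    + assert (i <> q) by (intro E; subst; auto). destruct (Nat.ltb_spec (i - 1) q); try lia.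
      replace (S (i - 1)) with i by lia. split. lia.
      assert (0 < Rsqr (c i)) by (apply Rsqr_pos_lt; eauto); unfold Rsqr in *; lra.
  - intros i j Hi Hij Hj Hneg. assert (i <> q) by (intro E; subst; rewrite Hq in Hneg; lra).
    assert (j <> q) by (intro E; subst; rewrite Hq in Hneg; lra).
    destruct (Nat.ltb_spec i q); destruct (Nat.ltb_spec j q); lia.
Qed.

Definition crt (c : nat -> R) (m : nat) : nat :=
  if Nat.leb 1 m then (if Rlt_dec (c m * c (S m)) 0 then 1%nat else 0%nat) else 0%nat.
Fixpoint crs (c : nat -> R) (N : nat) : nat :=
  match N with O => O | S N' => (crs c N' + crt c N')%nat end.

Lemma crs_zero c : forall N, crs c N = 0%nat -> forall m, (1 <= m)%nat -> (S m <= N)%nat -> c m * c (S m) >= 0.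
Proof.
  induction N; intros H m H1 H2. lia. simpl in H.
  destruct (Nat.eq_dec m N).
  - subst. unfold crt in H. destruct (Nat.leb_spec 1 N); try lia.
    destruct (Rlt_dec (c N * c (S N)) 0); try lia. lra.
  - apply IHN; auto; lia.
Qed.

Lemma crs_ins c c' p n : (1 <= p)%nat -> (S p <= n)%nat -> (forall i, (i <= p)%nat -> c' i = c i) ->
  c' (S p) = 0 -> (forall i, (S p <= i)%nat -> c' (S i) = c i) -> c p * c (S p) < 0 ->
  (crs c' (S n) + 1 = crs c n)%nat.
Proof.
  intros Hp Hpn H1 H0 H2 Hx.
  assert (A : forall N, (N <= p)%nat -> crs c' N = crs c N).
  { induction N; intros HN; simpl; auto. rewrite IHN by lia. f_equal. unfold crt.
    rewrite !H1 by lia. auto. }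
  assert (B : forall N, (S p <= N)%nat -> (crs c' (S N) + 1 = crs c N)%nat).
  { induction N; intros HN. lia. destruct (Nat.eq_dec N p).
    - subst N. simpl crs. rewrite A by lia.
      unfold crt. rewrite H0, H1 by lia.
      destruct (Nat.leb_spec 1 p); try lia. destruct (Nat.leb_spec 1 (S p)); try lia.
      rewrite Rmult_0_r, Rmult_0_l. destruct (Rlt_dec 0 0); try lra.
      destruct (Rlt_dec (c p * c (S p)) 0); try lra. lia.
    - assert (E : crt c' (S N) = crt c N).
      { unfold crt. rewrite !H2 by lia. destruct (Nat.leb_spec 1 (S N)); destruct (Nat.leb_spec 1 N); try lia. }
      specialize (IHN ltac:(lia)). change (crs c' (S (S N))) with (crs c' (S N) + crt c' (S N))%nat.
      change (crs c (S N)) with (crs c N + crt c N)%nat. lia. }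
  apply B; auto.
Qed.

Lemma am_ext c c' N K : (forall i, c i = c' i) -> at_most_sign_changes c N K -> at_most_sign_changes c' N K.
Proof.
  intros E H m [idx [H1 [H2 H3]]]. apply H. exists idx. split; auto. split; auto.
  intros l Hl. rewrite !E. auto.
Qed.

Lemma case3g a b k F : forall cnt n x w, (crs (Tseq w x) n <= cnt)%nat ->
  (2 <= n)%nat -> sdec x 1 n -> (forall i, (1 <= i <= n)%nat -> Icc a b (x i)) ->
  w 1%nat > 0 -> (1 <= k)%nat ->
  (forall j, (j < k)%nat -> sum1n (fun i => w i * x i ^ j) n = 0) ->
  Chain a b k F -> (forall t, Icc a b t -> F k t >= 0) ->
  at_most_sign_changes (Tseq w x) n (Z.of_nat k - 2) ->
  sum1n (fun i => w i * F 0%nat (x i)) n >= 0.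
Proof.
  induction cnt; intros n x w Hcr Hn Hx Hxi Hw1 Hk Hm HF HFk Hsc;
  (destruct (Classical_Prop.classic (exists p, (1 <= p)%nat /\ (S p <= n)%nat /\
      Tseq w x p * Tseq w x (S p) < 0)) as [[p [Hp1 [Hp2 Hpx]]]|Hno];
   [|apply (case3 a b n k x w F); auto; intros m Hm1; apply Rnot_lt_ge; intro; apply Hno; exists m; split; [lia|split; [lia|auto]]]).
  - exfalso. assert (crs (Tseq w x) n = 0%nat) by lia.
    pose proof (crs_zero _ n H p Hp1 Hp2). lra.
  - set (T := Tseq w x) in *.
    assert (HT1 : T 1%nat = 0) by (unfold T, Tseq; simpl; ring).
    assert (Hp2' : (2 <= p)%nat). { destruct (Nat.eq_dec p 1). subst. rewrite HT1 in Hpx. lra. lia. }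
    set (Sp := sum1n w p). set (Wp := sum1n (fun i => w i * x i) p).
    assert (HTp : T p = Wp - Sp * x p) by reflexivity.
    assert (HTd : T (S p) = T p + Sp * (x p - x (S p))) by (unfold T, Tseq, Sp; rewrite !sum1n_S; ring).
    assert (Hd : x (S p) < x p) by (apply Hx; lia).
    assert (HSp : Sp <> 0). { intro E. rewrite E, Rmult_0_l, Rplus_0_r in HTd. rewrite HTd in Hpx.
      assert (0 <= T p * T p) by apply Rle_0_sqr. lra. }
    set (t := Wp / Sp).
    assert (Ht : x (S p) < t < x p).
    { set (r := x p - t). set (D := x p - x (S p)) in *.
      assert (E1 : T p = - Sp * r) by (unfold r, t; rewrite HTp; field; auto).
      assert (E2 : T (S p) = Sp * (D - r)) by (rewrite HTd, E1; ring).
      rewrite E1, E2 in Hpx.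
      replace (- Sp * r * (Sp * (D - r))) with (- (Sp * Sp) * (r * (D - r))) in Hpx by ring.
      assert (0 < Sp * Sp) by (apply Rsqr_pos_lt in HSp; unfold Rsqr in HSp; lra).
      assert (Hr : 0 < r * (D - r)).
      { destruct (Rlt_dec 0 (r * (D - r))); auto.
        assert (- (Sp * Sp) * (r * (D - r)) >= 0).
        { replace (- (Sp * Sp) * (r * (D - r))) with ((Sp * Sp) * (- (r * (D - r)))) by ring.
          apply Rle_ge, Rmult_le_pos; lra. } lra. }
      assert (0 < D) by (unfold D; lra).
      assert (0 < r). { destruct (Rlt_dec 0 r); auto. assert (r * (D - r) <= 0) by nra. lra. }
      assert (r < D). { destruct (Rlt_dec r D); auto. assert (r * (D - r) <= 0) by nra. lra. }
      unfold r, D in *. lra. }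
    set (x' := fun i => if Nat.leb i p then x i else if Nat.eqb i (S p) then t else x (i - 1)%nat).
    set (w' := fun i => if Nat.leb i p then w i else if Nat.eqb i (S p) then 0 else w (i - 1)%nat).
    assert (Hdx : forall i, x i = del (S p) x' i).
    { intro i. unfold del, x'. destruct (Nat.ltb_spec i (S p)).
      - destruct (Nat.leb_spec i p); try lia. auto.
      - destruct (Nat.leb_spec (S i) p); try lia. destruct (Nat.eqb_spec (S i) (S p)); try lia. f_equal; lia. }
    assert (Hdw : forall i, w i = del (S p) w' i).
    { intro i. unfold del, w'. destruct (Nat.ltb_spec i (S p)).
      - destruct (Nat.leb_spec i p); try lia. auto.
      - destruct (Nat.leb_spec (S i) p); try lia. destruct (Nat.eqb_spec (S i) (S p)); try lia. f_equal; lia. }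
    assert (Hw0 : w' (S p) = 0).
    { unfold w'. destruct (Nat.leb_spec (S p) p); try lia. rewrite Nat.eqb_refl. auto. }
    destruct (DZ x' w' x w (S p) n ltac:(lia) Hw0 Hdx Hdw) as [Hsum [HSS HTT]].
    fold T in HTT.
    set (T' := Tseq w' x') in *.
    assert (HT'0 : T' (S p) = 0).
    { unfold T', Tseq. rewrite !sum1n_S. rewrite Hw0.
      assert (E1 : sum1n (fun i => w' i * x' i) p = Wp).
      { apply sum1n_ext. intros i Hi. unfold w', x'. destruct (Nat.leb_spec i p); try lia. auto. }
      assert (E2 : sum1n w' p = Sp).
      { apply sum1n_ext. intros i Hi. unfold w'. destruct (Nat.leb_spec i p); try lia. auto. }
      rewrite E1, E2. assert (E3 : x' (S p) = t).
      { unfold x'. destruct (Nat.leb_spec (S p) p); try lia. rewrite Nat.eqb_refl. auto. }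
      rewrite E3. unfold t. field. auto. }
    assert (Hle : forall i, (i <= p)%nat -> T' i = T i).
    { intros i Hi. rewrite HTT. unfold del. destruct (Nat.ltb_spec i (S p)); try lia. auto. }
    assert (Hge : forall i, (S p <= i)%nat -> T' (S i) = T i).
    { intros i Hi. rewrite HTT. unfold del. destruct (Nat.ltb_spec i (S p)); try lia. auto. }
    rewrite (Hsum (F 0%nat)).
    apply (IHcnt (S n) x' w').
    + pose proof (crs_ins T T' p n Hp1 Hp2 Hle HT'0 Hge Hpx). change (crs T' (S n) <= cnt)%nat. lia.
    + lia.
    + intros l H1 H2. unfold x'.
      destruct (Nat.leb_spec (S l) p); destruct (Nat.leb_spec l p); try lia.
      * apply Hx; lia.
      * destruct (Nat.eqb_spec (S l) (S p)); try lia. assert (l = p) by lia. subst l. lra.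
      * destruct (Nat.eqb_spec (S l) (S p)); try lia. destruct (Nat.eqb_spec l (S p)).
        -- subst l. replace (S (S p) - 1)%nat with (S p) by lia. lra.
        -- replace (S l - 1)%nat with l by lia.
           assert (Hl : x (S (l - 1)%nat) < x (l - 1)%nat) by (apply Hx; lia).
           replace (S (l - 1)%nat) with l in Hl by lia. exact Hl.
    + intros i Hi. unfold x'. destruct (Nat.leb_spec i p). apply Hxi; lia.
      destruct (Nat.eqb_spec i (S p)).
      * assert (A1 := Hxi p ltac:(lia)). assert (A2 := Hxi (S p) ltac:(lia)). unfold Icc in *. lra.
      * apply Hxi; lia.
    + unfold w'. destruct (Nat.leb_spec 1 p); try lia. auto.
    + auto.
    + intros j Hj. rewrite <- (Hm j Hj). symmetry. apply (Hsum (fun y => y ^ j)).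
    + auto.
    + auto.
    + apply (ins_am T' (S p) n). lia. lia. auto. apply (am_ext T); auto.
Qed.

Lemma main_strict a b n k x w F :
  (2 <= n)%nat -> sdec x 1 n -> (forall i, (1 <= i <= n)%nat -> Icc a b (x i)) ->
  w 1%nat > 0 -> (1 <= k)%nat ->
  (forall j, (j < k)%nat -> sum1n (fun i => w i * x i ^ j) n = 0) ->
  Chain a b k F -> (forall t, Icc a b t -> F k t >= 0) ->
  (at_most_sign_changes w n (Z.of_nat k)
   \/ at_most_sign_changes (fun m => sum1n w m) n (Z.of_nat k - 1)
   \/ at_most_sign_changes (Tseq w x) n (Z.of_nat k - 2)) ->
  sum1n (fun i => w i * F 0%nat (x i)) n >= 0.
Proof.
  intros Hn Hx Hxi Hw1 Hk Hm HF HFk [H|[H|H]].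
  - apply (case1 a b n k x w F); auto.
  - apply (case2 a b n k x w F); auto.
  - apply (case3g a b k F (crs (Tseq w x) n) n x w); auto.
Qed.

Lemma sum_upd2 (g g'' : nat -> R) i : (1 <= i)%nat ->
  (forall j, j <> i -> j <> S i -> g'' j = g j) -> g'' i + g'' (S i) = g i + g (S i) ->
  forall N, sum1n g'' N = sum1n g N + (if Nat.eqb N i then g'' i - g i else 0).
Proof.
  intros Hi H1 H2. induction N.
  - destruct (Nat.eqb_spec 0 i); try lia. simpl. ring.
  - rewrite !sum1n_S, IHN. destruct (Nat.eqb_spec N i); destruct (Nat.eqb_spec (S N) i); try lia.
    all: try (subst N; lra); try (subst i; ring); (rewrite H1 by lia; ring).
Qed.

Lemma upd_am (c c' : nat -> R) i N K : (1 <= i)%nat -> (i < N)%nat ->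
  (forall j, j <> i -> c' j = c j) -> c' i = c (S i) ->
  at_most_sign_changes c N K -> at_most_sign_changes c' N K.
Proof.
  intros Hi HiN H1 H2. apply sc_map with (phi := fun j => if Nat.eqb j i then S i else j). lia.
  - intros j Hj Hnz. destruct (Nat.eqb_spec j i).
    + subst. split. lia. rewrite <- H2. assert (0 < Rsqr (c' i)) by (apply Rsqr_pos_lt; auto). unfold Rsqr in *; lra.
    + split. lia. rewrite <- (H1 j) by auto. assert (0 < Rsqr (c' j)) by (apply Rsqr_pos_lt; auto). unfold Rsqr in *; lra.
  - intros j1 j2 Hj1 H12 Hj2 Hneg. destruct (Nat.eqb_spec j1 i); destruct (Nat.eqb_spec j2 i); try lia.
    subst j1. destruct (Nat.eq_dec j2 (S i)); try lia. subst j2. rewrite H2, H1 in Hneg by lia.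
    assert (0 <= c (S i) * c (S i)) by apply Rle_0_sqr. lra.
Qed.

Lemma merge_am (c c' : nat -> R) i N K : (1 <= i)%nat -> (i < N)%nat ->
  (forall j, j <> i -> j <> S i -> c' j = c j) -> c' i = c i + c (S i) -> c' (S i) = 0 ->
  at_most_sign_changes c N K -> at_most_sign_changes c' N K.
Proof.
  intros Hi HiN H1 H2 H3.
  apply sc_map with (phi := fun j => if Nat.eqb j i then (if Rlt_dec 0 (c i * c' i) then i else S i) else j). lia.
  - intros j Hj Hnz. destruct (Nat.eqb_spec j i).
    + subst. destruct (Rlt_dec 0 (c i * c' i)). split. lia. lra.
      split. lia. assert (0 < Rsqr (c' i)) by (apply Rsqr_pos_lt; auto). unfold Rsqr in *.
      rewrite H2 in H at 1. lra.
    + destruct (Nat.eq_dec j (S i)). subst. contradiction.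
      split. lia. rewrite <- (H1 j) by auto. assert (0 < Rsqr (c' j)) by (apply Rsqr_pos_lt; auto). unfold Rsqr in *; lra.
  - intros j1 j2 Hj1 H12 Hj2 Hneg.
    assert (j2 <> S i) by (intro E; subst; rewrite H3 in Hneg; lra).
    assert (j1 <> S i) by (intro E; subst; rewrite H3 in Hneg; lra).
    destruct (Nat.eqb_spec j1 i); destruct (Nat.eqb_spec j2 i); try lia;
    destruct (Rlt_dec 0 (c i * c' i)); lia.
Qed.

Lemma main_all a b k F : forall N n x w, (n <= N)%nat ->
  (2 <= n)%nat -> x 1%nat > x 2%nat -> (forall i, (2 <= i < n)%nat -> x (S i) <= x i) ->
  (forall i, (1 <= i <= n)%nat -> Icc a b (x i)) ->
  w 1%nat > 0 -> (1 <= k)%nat ->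
  (forall j, (j < k)%nat -> sum1n (fun i => w i * x i ^ j) n = 0) ->
  Chain a b k F -> (forall t, Icc a b t -> F k t >= 0) ->
  (at_most_sign_changes w n (Z.of_nat k)
   \/ at_most_sign_changes (fun m => sum1n w m) n (Z.of_nat k - 1)
   \/ at_most_sign_changes (Tseq w x) n (Z.of_nat k - 2)) ->
  sum1n (fun i => w i * F 0%nat (x i)) n >= 0.
Proof.
  induction N; intros n x w HnN Hn H12 Hmon Hxi Hw1 Hk Hm HF HFk Hsc. lia.
  destruct (Classical_Prop.classic (exists i, (2 <= i < n)%nat /\ x (S i) = x i)) as [[i [Hi Htie]]|Hno].
  2: { apply (main_strict a b n k x w F); auto. intros l H1 H2.
       destruct (Nat.eq_dec l 1). subst. lra.
       assert (x (S l) <= x l) by (apply Hmon; lia).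
       destruct (Req_dec (x (S l)) (x l)). exfalso. apply Hno. exists l. split; auto; lia. lra. }
  set (w'' := fun j => if Nat.eqb j i then w i + w (S i) else if Nat.eqb j (S i) then 0 else w j).
  set (x' := del (S i) x). set (w' := del (S i) w'').
  assert (Hw''0 : w'' (S i) = 0).
  { unfold w''. destruct (Nat.eqb_spec (S i) i); try lia. rewrite Nat.eqb_refl. auto. }
  assert (Hw''i : w'' i = w i + w (S i)) by (unfold w''; rewrite Nat.eqb_refl; auto).
  assert (Hw''o : forall j, j <> i -> j <> S i -> w'' j = w j).
  { intros j H1 H2. unfold w''. destruct (Nat.eqb_spec j i); try lia. destruct (Nat.eqb_spec j (S i)); try lia. auto. }
  destruct (DZ x w'' x' w' (S i) (n - 1) ltac:(lia) Hw''0 (fun _ => eq_refl) (fun _ => eq_refl)) as [Hsum [HS HT]].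
  replace (S (n - 1)) with n in Hsum by lia.
  assert (Hup : forall h : R -> R, sum1n (fun j => w'' j * h (x j)) n = sum1n (fun j => w j * h (x j)) n).
  { intro h. rewrite (sum_upd2 (fun j => w j * h (x j)) (fun j => w'' j * h (x j)) i); try lia.
    - destruct (Nat.eqb_spec n i); try lia. ring.
    - intros j H1 H2. rewrite Hw''o; auto.
    - rewrite Hw''i, Hw''0, Htie. ring. }
  assert (HS'' : forall m, m <> i -> sum1n w'' m = sum1n w m).
  { intros m Hmi. rewrite (sum_upd2 w w'' i); try lia; auto. destruct (Nat.eqb_spec m i); try lia. ring.
    rewrite Hw''i, Hw''0. ring. }
  assert (HS''i : sum1n w'' i = sum1n w (S i)).
  { rewrite (sum_upd2 w w'' i); try lia; auto. rewrite Nat.eqb_refl, Hw''i, sum1n_S. ring.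
    rewrite Hw''i, Hw''0. ring. }
  assert (HX : forall m, sum1n (fun j => w'' j * x j) m =
              sum1n (fun j => w j * x j) m + (if Nat.eqb m i then w (S i) * x i else 0)).
  { intro m. rewrite (sum_upd2 (fun j => w j * x j) (fun j => w'' j * x j) i); try lia.
    - destruct (Nat.eqb_spec m i). rewrite Hw''i. ring. ring.
    - intros j H1 H2. rewrite Hw''o; auto.
    - rewrite Hw''i, Hw''0, Htie. ring. }
  assert (HT'' : forall m, m <> i -> Tseq w'' x m = Tseq w x m).
  { intros m Hmi. unfold Tseq. rewrite HX, HS'' by auto. destruct (Nat.eqb_spec m i); try lia. rewrite Rplus_0_r. reflexivity. }
  assert (HT''i : Tseq w'' x i = Tseq w x (S i)).
  { unfold Tseq. rewrite HX, HS''i, Nat.eqb_refl. rewrite (sum1n_S (fun j => w j * x j) i). rewrite !Htie. ring. }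
  rewrite <- (Hup (F 0%nat)), <- Hsum.
  apply (IHN (n - 1)%nat x' w').
  - lia.
  - lia.
  - unfold x', del. destruct (Nat.ltb_spec 1 (S i)); destruct (Nat.ltb_spec 2 (S i)); try lia. auto.
  - intros j Hj. unfold x', del.
    destruct (Nat.ltb_spec (S j) (S i)); destruct (Nat.ltb_spec j (S i)); try lia.
    + apply Hmon; lia.
    + assert (j = i) by lia. subst j. rewrite <- Htie. apply Hmon; lia.
    + apply Hmon; lia.
  - intros j Hj. unfold x', del. destruct (Nat.ltb_spec j (S i)); apply Hxi; lia.
  - unfold w', del. destruct (Nat.ltb_spec 1 (S i)); try lia. rewrite Hw''o by lia. auto.
  - auto.
  - intros j Hj. rewrite (Hsum (fun y => y ^ j)). rewrite (Hup (fun y => y ^ j)). apply Hm; auto.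
  - auto.
  - auto.
  - assert (Hn1 : (1 <= n - 1)%nat) by lia.
    replace n with (S (n - 1)) in Hsc by lia.
    destruct Hsc as [H|[H|H]].
    + left. apply del_am; auto. apply (merge_am w w'' i); auto; lia.
    + right; left. apply (am_ext (del (S i) (fun m => sum1n w'' m))). intro m. rewrite HS. auto.
      apply del_am; auto. apply (upd_am (fun m => sum1n w m) (fun m => sum1n w'' m) i); auto; lia.
    + right; right. apply (am_ext (del (S i) (Tseq w'' x))). intro m. rewrite HT. auto.
      apply del_am; auto. apply (upd_am (Tseq w x) (Tseq w'' x) i); auto; lia.
Qed.

Theorem mainTheorem5 (a b : R) (n k : nat) (x w : nat -> R) :
  (2 <= n)%nat ->
  x 1%nat > x 2%nat ->
  (forall i, (2 <= i < n)%nat -> x (S i) <= x i) ->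
  (forall i, (1 <= i <= n)%nat -> a <= x i <= b) ->
  w 1%nat > 0 ->
  (1 <= k)%nat ->
  (forall j, (j < k)%nat -> sum1n (fun i => w i * x i ^ j) n = 0) ->
  (at_most_sign_changes w n (Z.of_nat k)
   \/ at_most_sign_changes (fun m => sum1n w m) n (Z.of_nat k - 1)
   \/ at_most_sign_changes
        (fun m => sum1n (fun i => w i * x i) m - sum1n w m * x m) n
        (Z.of_nat k - 2)) ->
  forall (f : R -> R) (F : nat -> R -> R),
    derivs_on a b k f F ->
    (forall t, a <= t <= b -> F k t >= 0) ->
    sum1n (fun i => w i * f (x i)) n >= 0.
Proof.
  intros Hn H12 Hmon Hxi Hw1 Hk Hm Hsc f F [HF0 HF] HFk.
  rewrite (sum1n_ext _ (fun i => w i * F 0%nat (x i))).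
  2: { intros i Hi. rewrite HF0. auto. apply Hxi; auto. }
  apply (main_all a b k F n n x w); auto.
Qed.
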